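(* Let $u,v,w$ be unit vectors in an inner product space (over $\mathbb{R}$ or $\mathbb{C}$). Then for every real $k\ge2$, $$\sqrt[k]{1-|\langle u,v\rangle|^k}\le\sqrt[k]{1-|\langle u,w\rangle|^k}+\sqrt[k]{1-|\langle w,v\rangle|^k};$$ in particular $$\sqrt{1-|\langle u,v\rangle|^2}\le\sqrt{1-|\langle u,w\rangle|^2}+\sqrt{1-|\langle w,v\rangle|^2}.$$ The same inequalities hold with $|\operatorname{Re}\langle\cdot,\cdot\rangle|$ in place of $|\langle\cdot,\cdot\rangle|$. *)

(* Defs.v *)
From Stdlib Require Import Reals.
Open Scope R_scope.

(** Nonnegative real power with positive exponent, with the convention
    0 ^ y = 0 (Stdlib's [Rpower 0 y] is 1, since [ln 0 = 0]). *)
Definition rpow (x y : R) : R := if Rlt_dec 0 x then Rpower x y else 0.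

Definition kroot (k x : R) : R := rpow x (/ k).

Record RInnerSpace (V : Type) := {
  r_add : V -> V -> V;
  r_zero : V;
  r_opp : V -> V;
  r_scal : R -> V -> V;
  r_inner : V -> V -> R;
  r_addA : forall x y z, r_add x (r_add y z) = r_add (r_add x y) z;
  r_addC : forall x y, r_add x y = r_add y x;
  r_add0 : forall x, r_add x r_zero = x;
  r_addN : forall x, r_add x (r_opp x) = r_zero;
  r_scalA : forall a b x, r_scal a (r_scal b x) = r_scal (a * b) x;
  r_scal1 : forall x, r_scal 1 x = x;
  r_scalDr : forall a x y, r_scal a (r_add x y) = r_add (r_scal a x) (r_scal a y);
  r_scalDl : forall a b x, r_scal (a + b) x = r_add (r_scal a x) (r_scal b x);
  r_inner_sym : forall x y, r_inner x y = r_inner y x;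
  r_inner_addl : forall x y z, r_inner (r_add x y) z = r_inner x z + r_inner y z;
  r_inner_scall : forall a x z, r_inner (r_scal a x) z = a * r_inner x z;
  r_inner_pos : forall x, 0 <= r_inner x x;
  r_inner_def : forall x, r_inner x x = 0 -> x = r_zero
}.
Arguments r_inner {V} _ _ _.

Definition r_norm {V} (S : RInnerSpace V) (x : V) : R := sqrt (r_inner S x x).

Record Cplx := mkC { Cre : R; Cim : R }.
Definition Cadd (z w : Cplx) : Cplx := mkC (Cre z + Cre w) (Cim z + Cim w).
Definition Cmul (z w : Cplx) : Cplx :=
  mkC (Cre z * Cre w - Cim z * Cim w) (Cre z * Cim w + Cim z * Cre w).
Definition Cconj (z : Cplx) : Cplx := mkC (Cre z) (- Cim z).
Definition C0 : Cplx := mkC 0 0.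
Definition C1 : Cplx := mkC 1 0.
Definition Cmod (z : Cplx) : R := sqrt (Cre z ^ 2 + Cim z ^ 2).

Record CInnerSpace (V : Type) := {
  c_add : V -> V -> V;
  c_zero : V;
  c_opp : V -> V;
  c_scal : Cplx -> V -> V;
  c_inner : V -> V -> Cplx;
  c_addA : forall x y z, c_add x (c_add y z) = c_add (c_add x y) z;
  c_addC : forall x y, c_add x y = c_add y x;
  c_add0 : forall x, c_add x c_zero = x;
  c_addN : forall x, c_add x (c_opp x) = c_zero;
  c_scalA : forall a b x, c_scal a (c_scal b x) = c_scal (Cmul a b) x;
  c_scal1 : forall x, c_scal C1 x = x;
  c_scalDr : forall a x y, c_scal a (c_add x y) = c_add (c_scal a x) (c_scal a y);
  c_scalDl : forall a b x, c_scal (Cadd a b) x = c_add (c_scal a x) (c_scal b x);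
  c_inner_conj : forall x y, c_inner y x = Cconj (c_inner x y);
  c_inner_addl : forall x y z, c_inner (c_add x y) z = Cadd (c_inner x z) (c_inner y z);
  c_inner_scall : forall a x z, c_inner (c_scal a x) z = Cmul a (c_inner x z);
  c_inner_pos : forall x, 0 <= Cre (c_inner x x);
  c_inner_def : forall x, c_inner x x = C0 -> x = c_zero
}.
Arguments c_inner {V} _ _ _.

Definition c_norm {V} (S : CInnerSpace V) (x : V) : R := sqrt (Cre (c_inner S x x)).

(* Main.v *)
Require Import Defs.
From Stdlib Require Import Reals Lra Lia Psatz.
Open Scope R_scope.

Lemma rpow_pos x e : 0 < x -> rpow x e = Rpower x e.
Proof. intro H; unfold rpow; destruct (Rlt_dec 0 x); [reflexivity|lra]. Qed.
Lemma rpow_0l e : rpow 0 e = 0.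
Proof. unfold rpow; destruct (Rlt_dec 0 0); [lra|reflexivity]. Qed.
Lemma Rpower_gt0 x e : 0 < Rpower x e.
Proof. unfold Rpower; apply exp_pos. Qed.
Lemma rpow_nonneg x e : 0 <= rpow x e.
Proof. unfold rpow; destruct (Rlt_dec 0 x); [left; apply Rpower_gt0|lra]. Qed.
Lemma rpow_le e a b : 0 <= e -> 0 <= a <= b -> rpow a e <= rpow b e.
Proof.
  intros He [Ha Hab]. destruct Ha as [Ha|Ha].
  - rewrite !rpow_pos by lra. apply Rle_Rpower_l; lra.
  - subst. rewrite rpow_0l. apply rpow_nonneg.
Qed.
Lemma rpow_1l e : rpow 1 e = 1.
Proof. rewrite rpow_pos by lra. unfold Rpower. rewrite ln_1, Rmult_0_r. apply exp_0. Qed.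
Lemma rpow_mult x y e : 0 <= x -> 0 <= y -> rpow (x*y) e = rpow x e * rpow y e.
Proof.
  intros [Hx|Hx] [Hy|Hy]; try (subst; rewrite ?Rmult_0_l, ?Rmult_0_r, !rpow_0l; ring).
  rewrite !rpow_pos by nra. symmetry; apply Rpower_mult_distr; auto.
Qed.
Lemma rpow_plus x p q : 0 <= x -> rpow x (p+q) = rpow x p * rpow x q.
Proof.
  intros [Hx|Hx]. rewrite !rpow_pos by lra. apply Rpower_plus.
  subst; rewrite !rpow_0l; ring.
Qed.
Lemma rpow_rpow x a b : 0 <= x -> rpow (rpow x a) b = rpow x (a*b).
Proof.
  intros [Hx|Hx]. rewrite (rpow_pos x a) by lra. rewrite !rpow_pos by (auto using Rpower_gt0).
  apply Rpower_mult.
  subst; rewrite !rpow_0l; reflexivity.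
Qed.
Lemma rpow_1 x : 0 <= x -> rpow x 1 = x.
Proof. intros [Hx|Hx]. rewrite rpow_pos by lra; apply Rpower_1; auto. subst; apply rpow_0l. Qed.

Lemma tangent m x y : 1 <= m -> 0 < x -> 0 <= y ->
  rpow x m + m * rpow x (m-1) * (y - x) <= rpow y m.
Proof.
  intros Hm Hx Hy.
  assert (Hxm : rpow x m = rpow x (m-1) * x).
  { replace m with ((m-1)+1) at 1 by ring. rewrite rpow_plus by lra. rewrite rpow_1 by lra. ring. }
  assert (Hp := rpow_nonneg x (m-1)).
  destruct Hy as [Hy|Hy].
  2:{ subst. rewrite rpow_0l, Hxm. assert (0 <= rpow x (m-1) * x * (m-1)) by (apply Rmult_le_pos; [apply Rmult_le_pos|]; lra). nra. }
  destruct (Rtotal_order x y) as [Hlt|[Heq|Hgt]].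
  - destruct (MVT_cor2 (fun t => Rpower t m) (fun t => m * Rpower t (m-1)) x y Hlt) as [c [Hc1 Hc2]].
    { intros c Hc. apply derivable_pt_lim_power. lra. }
    rewrite !rpow_pos in * by lra. 
    assert (Rpower x (m-1) <= Rpower c (m-1)) by (apply Rle_Rpower_l; lra).
    assert (0 <= m * (Rpower c (m-1) - Rpower x (m-1)) * (y - x)) by (apply Rmult_le_pos; [apply Rmult_le_pos|]; lra).
    nra.
  - subst. lra.
  - destruct (MVT_cor2 (fun t => Rpower t m) (fun t => m * Rpower t (m-1)) y x Hgt) as [c [Hc1 Hc2]].
    { intros c Hc. apply derivable_pt_lim_power. lra. }
    rewrite !rpow_pos in * by lra.
    assert (Rpower c (m-1) <= Rpower x (m-1)) by (apply Rle_Rpower_l; lra).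
    assert (0 <= m * (Rpower x (m-1) - Rpower c (m-1)) * (x - y)) by (apply Rmult_le_pos; [apply Rmult_le_pos|]; lra).
    nra.
Qed.

Lemma jensen m a b l : 1 <= m -> 0 <= a -> 0 <= b -> 0 <= l <= 1 ->
  rpow (l*a + (1-l)*b) m <= l * rpow a m + (1-l) * rpow b m.
Proof.
  intros Hm Ha Hb Hl. set (x := l*a+(1-l)*b).
  assert (Hx : 0 <= x) by (unfold x; nra).
  destruct Hx as [Hx|Hx].
  - pose proof (tangent m x a Hm Hx Ha). pose proof (tangent m x b Hm Hx Hb).
    set (c := m * rpow x (m-1)) in *.
    assert (E : l * (c*(a - x)) + (1-l)*(c*(b-x)) = 0) by (unfold x; ring).
    assert (l * (rpow x m + c*(a-x)) <= l * rpow a m) by (apply Rmult_le_compat_l; lra).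
    assert ((1-l) * (rpow x m + c*(b-x)) <= (1-l) * rpow b m) by (apply Rmult_le_compat_l; lra).
    nra.
  - rewrite <- Hx, rpow_0l. pose proof (rpow_nonneg a m). pose proof (rpow_nonneg b m). nra.
Qed.

Lemma karamata m A B d : 1 <= m -> 0 <= B <= A -> 0 <= d ->
  rpow A m - rpow B m <= rpow (A+d) m - rpow (B+d) m.
Proof.
  intros Hm HAB Hd.
  destruct (Req_dec (A+d-B) 0) as [H0|H0].
  { assert (A = B) by lra. assert (d = 0) by lra. subst. lra. }
  set (L := A+d-B). set (mu := (A-B)/L).
  assert (HL : 0 < L) by (unfold L; lra).
  assert (Hmu : 0 <= mu <= 1).
  { unfold mu; split. unfold Rdiv; apply Rmult_le_pos; [lra| left; apply Rinv_0_lt_compat; lra].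
    apply (Rmult_le_reg_r L); auto. unfold Rdiv. rewrite Rmult_assoc, Rinv_l by lra. unfold L in *; lra. }
  assert (E1 : A = mu*(A+d) + (1-mu)*B).
  { unfold mu, L. field. lra. }
  assert (E2 : B+d = (1-mu)*(A+d) + (1-(1-mu))*B).
  { unfold mu, L. field. lra. }
  pose proof (jensen m (A+d) B mu Hm ltac:(lra) ltac:(lra) Hmu).
  pose proof (jensen m (A+d) B (1-mu) Hm ltac:(lra) ltac:(lra) ltac:(lra)).
  rewrite <- E1 in H. rewrite <- E2 in H1. lra.
Qed.

Definition G k x := kroot k (1 - rpow (1 - x*x) (k/2)).

Lemma kroot_le k a b : 0 < k -> 0 <= a <= b -> kroot k a <= kroot k b.
Proof. intros. unfold kroot. apply rpow_le; auto. left; apply Rinv_0_lt_compat; lra. Qed.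
Lemma kroot_nonneg k a : 0 <= kroot k a.
Proof. apply rpow_nonneg. Qed.

Lemma rpow_sq k s : 0 <= s -> rpow s k = rpow (s*s) (k/2).
Proof. intros. rewrite rpow_mult by lra. rewrite <- rpow_plus by lra. f_equal; field. Qed.

Lemma rpow_le1 z e : 0 <= e -> 0 <= z <= 1 -> rpow z e <= 1.
Proof. intros. rewrite <- (rpow_1l e). apply rpow_le; lra. Qed.

Lemma G_mono k x y : 2 <= k -> 0 <= x <= y -> y <= 1 -> G k x <= G k y.
Proof.
  intros Hk Hxy Hy. unfold G. apply kroot_le; [lra|].
  assert (rpow (1 - y*y) (k/2) <= rpow (1 - x*x) (k/2)) by (apply rpow_le; nra).
  assert (rpow (1 - x*x) (k/2) <= 1) by (apply rpow_le1; nra).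
  lra.
Qed.

Lemma G0 k : 2 <= k -> G k 0 = 0.
Proof. intros. unfold G, kroot. rewrite Rmult_0_l, Rminus_0_r, rpow_1l, Rminus_diag. apply rpow_0l. Qed.
Lemma G1 k : 2 <= k -> G k 1 = 1.
Proof. intros. unfold G, kroot. replace (1 - 1*1) with 0 by ring. rewrite rpow_0l, Rminus_0_r. apply rpow_1l. Qed.

Lemma mul_kroot k s X : 0 < k -> 0 <= s -> 0 <= X -> s * kroot k X = kroot k (rpow s k * X).
Proof.
  intros Hk Hs HX. unfold kroot. rewrite rpow_mult by (auto using rpow_nonneg).
  rewrite rpow_rpow by auto. replace (k * / k) with 1 by (field; lra). rewrite rpow_1; auto.
Qed.

Lemma G_star k s y : 2 <= k -> 0 < s <= y -> y <= 1 -> s * G k y <= y * G k s.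
Proof.
  intros Hk Hs Hy. unfold G.
  assert (Hm : 1 <= k/2) by lra.
  assert (rpow (1 - y*y) (k/2) <= 1) by (apply rpow_le1; nra).
  assert (rpow (1 - s*s) (k/2) <= 1) by (apply rpow_le1; nra).
  rewrite !mul_kroot by lra. apply kroot_le; [lra|]. split.
  { apply Rmult_le_pos; [apply rpow_nonneg|lra]. }
  rewrite (rpow_sq k s), (rpow_sq k y) by lra.
  set (sg := s*s) in *. set (et := y*y) in *. set (m := k/2) in *.
  assert (Hsg : 0 < sg <= et) by (unfold sg, et; nra).
  assert (Het : et <= 1) by (unfold et; nra).
  pose proof (karamata m (et*(1-sg)) (sg*(1-et)) (sg*et) Hm ltac:(nra) ltac:(nra)) as K.
  replace (et * (1 - sg) + sg * et) with et in K by ring.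
  replace (sg * (1 - et) + sg * et) with sg in K by ring.
  rewrite !rpow_mult in K by nra. nra.
Qed.

Lemma G_sub k x s t : 2 <= k -> 0 <= x -> 0 <= s -> 0 <= t -> x <= 1 -> s <= 1 -> t <= 1 ->
  x <= s + t -> G k x <= G k s + G k t.
Proof.
  intros Hk Hx Hs Ht Hx1 Hs1 Ht1 Hxst.
  assert (Gs := kroot_nonneg k (1 - rpow (1 - s*s) (k/2))).
  assert (Gt := kroot_nonneg k (1 - rpow (1 - t*t) (k/2))).
  fold (G k s) in Gs. fold (G k t) in Gt.
  destruct Hs as [Hs|Hs]; [destruct Ht as [Ht|Ht]|].
  - set (y := Rmin (s+t) 1).
    assert (Hy1 : y <= 1) by (unfold y; apply Rmin_r).
    assert (Hy2 : y <= s+t) by (unfold y; apply Rmin_l).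
    assert (Hy3 : x <= y) by (unfold y; apply Rmin_glb; lra).
    assert (Hsy : s <= y) by (unfold y; apply Rmin_glb; lra).
    assert (Hty : t <= y) by (unfold y; apply Rmin_glb; lra).
    pose proof (G_mono k x y Hk ltac:(lra) Hy1).
    pose proof (G_star k s y Hk ltac:(lra) Hy1).
    pose proof (G_star k t y Hk ltac:(lra) Hy1).
    assert (0 <= G k y) by (unfold G; apply kroot_nonneg).
    assert ((s+t) * G k y <= y * (G k s + G k t)) by lra.
    assert (y * G k y <= (s+t) * G k y) by (apply Rmult_le_compat_r; lra).
    assert (y * G k y <= y * (G k s + G k t)) by lra.
    assert (G k y <= G k s + G k t). { apply (Rmult_le_reg_l y). lra. exact H5. }
    lra.
  - subst. rewrite G0 by lra. pose proof (G_mono k x s Hk ltac:(lra) Hs1). lra.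
  - subst. rewrite G0 by lra. pose proof (G_mono k x t Hk ltac:(lra) Ht1). lra.
Qed.

Lemma H_G k a : 2 <= k -> 0 <= a <= 1 -> kroot k (1 - rpow a k) = G k (sqrt (1 - a*a)).
Proof.
  intros Hk Ha. unfold G. rewrite sqrt_sqrt by nra.
  replace (1 - (1 - a*a)) with (a*a) by ring. rewrite <- rpow_sq by lra. reflexivity.
Qed.

Lemma final_ineq k a b c : 2 <= k -> 0 <= a <= 1 -> 0 <= b <= 1 -> 0 <= c <= 1 ->
  sqrt (1 - a*a) <= sqrt (1 - b*b) + sqrt (1 - c*c) ->
  kroot k (1 - rpow a k) <= kroot k (1 - rpow b k) + kroot k (1 - rpow c k).
Proof.
  intros Hk Ha Hb Hc H. rewrite !H_G by auto.
  assert (forall z, 0 <= z <= 1 -> 0 <= sqrt (1 - z*z) <= 1).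
  { intros z Hz. split. apply sqrt_pos. apply Rle_trans with (sqrt 1); [apply sqrt_le_1_alt; nra | rewrite sqrt_1; lra]. }
  apply G_sub; auto; try apply H0; auto.
Qed.

Lemma sq_abs z : Rabs z * Rabs z = z*z.
Proof. unfold Rabs; destruct (Rcase_abs z); ring. Qed.

Lemma metric P Q R : Q*Q <= 1 -> R*R <= 1 ->
  (P - Q*R)*(P - Q*R) <= (1 - Q*Q)*(1 - R*R) ->
  sqrt (1 - P*P) <= sqrt (1 - Q*Q) + sqrt (1 - R*R).
Proof.
  intros HQ HR H.
  set (sq := sqrt (1 - Q*Q)). set (sr := sqrt (1 - R*R)).
  assert (Hsq : sq*sq = 1 - Q*Q) by (apply sqrt_sqrt; lra).
  assert (Hsr : sr*sr = 1 - R*R) by (apply sqrt_sqrt; lra).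
  assert (Hsq0 : 0 <= sq) by apply sqrt_pos.
  assert (Hsr0 : 0 <= sr) by apply sqrt_pos.
  set (b := Rabs Q). set (c := Rabs R).
  assert (Hb : b*b = Q*Q) by (apply sq_abs).
  assert (Hc : c*c = R*R) by (apply sq_abs).
  assert (Hb0 : 0 <= b) by apply Rabs_pos. assert (Hc0 : 0 <= c) by apply Rabs_pos.
  assert (Hb1 : b <= 1) by nra. assert (Hc1 : c <= 1) by nra.
  assert (0 <= Q*Q) by nra. assert (0 <= R*R) by nra.
  assert (Hsq1 : sq <= 1). { destruct (Rle_or_lt sq 1); auto. nra. }
  assert (Hsr1 : sr <= 1). { destruct (Rle_or_lt sr 1); auto. nra. }
  assert (Hd : Rabs (P - Q*R) <= sq*sr).
  { destruct (Rle_or_lt (Rabs (P - Q*R)) (sq*sr)) as [h|h]; auto.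
    exfalso. assert (Rabs (P-Q*R) * Rabs (P-Q*R) = (P-Q*R)*(P-Q*R)) by (apply sq_abs).
    assert (0 <= sq*sr) by nra. nra. }
  assert (HP : b*c - sq*sr <= Rabs P).
  { assert (Rabs (Q*R) <= Rabs P + Rabs (P - Q*R)).
    { replace (Q*R) with (P - (P - Q*R)) at 1 by ring. apply Rabs_triang_inv2 || (unfold Rminus; eapply Rle_trans; [apply Rabs_triang|rewrite Rabs_Ropp; lra]). }
    unfold b, c. rewrite <- Rabs_mult. lra. }
  assert (HPP : Rabs P * Rabs P = P*P) by (apply sq_abs).
  assert (Hmain : 1 - P*P <= (sq+sr)*(sq+sr)).
  { destruct (Rle_or_lt (b*c) (sq*sr)) as [h|h].
    - assert (b*c*(b*c) <= sq*sr*(sq*sr)) by (apply Rmult_le_compat; nra).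
      assert (Q*Q + R*R <= 1) by nra.
      assert (0 <= sq*sr) by nra. nra.
    - assert ((b*c - sq*sr)*(b*c - sq*sr) <= P*P) by (rewrite <- HPP; apply Rmult_le_compat; nra).
      assert (Id : (b*c - sq*sr)*(b*c - sq*sr) + (sq*c + b*sr)*(sq*c+b*sr) = 1) by nra.
      assert (sq*c + b*sr <= sq + sr) by nra.
      assert (0 <= sq*c + b*sr) by nra.
      assert ((sq*c + b*sr)*(sq*c+b*sr) <= (sq+sr)*(sq+sr)) by (apply Rmult_le_compat; nra).
      lra. }
  rewrite <- (sqrt_square (sq+sr)) by lra. apply sqrt_le_1_alt. exact Hmain.
Qed.

Section Real.
Context {V : Type} (S : RInnerSpace V).
Notation ip := (r_inner S).
Notation add := (r_add V S).
Notation scal := (r_scal V S).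

Lemma ip_addr x y z : ip x (add y z) = ip x y + ip x z.
Proof. rewrite r_inner_sym, r_inner_addl, (r_inner_sym _ _ y x), (r_inner_sym _ _ z x). reflexivity. Qed.
Lemma ip_scalr a x y : ip x (scal a y) = a * ip x y.
Proof. rewrite r_inner_sym, r_inner_scall, (r_inner_sym _ _ y x). reflexivity. Qed.

Lemma ip_expand x a y z b t :
  ip (add x (scal a y)) (add z (scal b t)) = ip x z + b * ip x t + a * ip y z + a*b*ip y t.
Proof. rewrite !r_inner_addl, !ip_addr, !r_inner_scall, !ip_scalr. ring. Qed.

Lemma quad_cs A B C : 0 <= C -> (forall t, 0 <= A + 2*t*B + t*t*C) -> B*B <= A*C.
Proof.
  intros HC H. destruct HC as [HC|HC].
  - pose proof (H (-B/C)). 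
    assert (E : A + 2*(-B/C)*B + (-B/C)*(-B/C)*C = (A*C - B*B)/C) by (field; lra).
    rewrite E in H0. 
    assert (0 <= (A*C - B*B)/C * C) by (apply Rmult_le_pos; lra).
    replace ((A*C - B*B)/C*C) with (A*C - B*B) in H1 by (field; lra). lra.
  - subst. destruct (Req_dec B 0) as [h|h]. subst; lra.
    exfalso. pose proof (H (-(Rabs A+1)/(2*B))).
    replace (A + 2 * (- (Rabs A + 1) / (2 * B)) * B + - (Rabs A + 1) / (2 * B) * (- (Rabs A + 1) / (2 * B)) * 0)
      with (A - (Rabs A + 1)) in H0 by (field; lra).
    pose proof (Rle_abs A). lra.
Qed.

Lemma cs x y : ip x y * ip x y <= ip x x * ip y y.
Proof.
  apply quad_cs. apply r_inner_pos. intro t.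
  pose proof (r_inner_pos _ S (add x (scal t y))).
  rewrite ip_expand in H. rewrite (r_inner_sym _ S y x) in H. nra.
Qed.

Lemma unit_ip u : r_norm S u = 1 -> ip u u = 1.
Proof. unfold r_norm. intro H. rewrite <- (sqrt_sqrt (ip u u)) by apply r_inner_pos. rewrite H; ring. Qed.

Lemma key_real u v w : ip u u = 1 -> ip v v = 1 -> ip w w = 1 ->
  let p := ip u v in let q := ip u w in let r := ip w v in
  p*p <= 1 /\ q*q <= 1 /\ r*r <= 1 /\ (p - q*r)*(p-q*r) <= (1-q*q)*(1-r*r).
Proof.
  intros Hu Hv Hw p q r.
  pose proof (cs u v). pose proof (cs u w). pose proof (cs w v).
  rewrite Hu, Hv, Hw in *. fold p q r in H, H0, H1.
  split; [lra|split;[lra|split;[lra|]]].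
  pose proof (cs (add u (scal (-q) w)) (add v (scal (-r) w))) as C.
  rewrite !ip_expand in C. rewrite (r_inner_sym _ S w u), (r_inner_sym _ S v w) in C.
  rewrite Hu, Hv, Hw in C. fold p q r in C. nra.
Qed.
End Real.

Lemma real_case (V : Type) (S : RInnerSpace V) (u v w : V) (k : R) :
     r_norm S u = 1 -> r_norm S v = 1 -> r_norm S w = 1 -> 2 <= k ->
     kroot k (1 - rpow (Rabs (r_inner S u v)) k)
       <= kroot k (1 - rpow (Rabs (r_inner S u w)) k)
          + kroot k (1 - rpow (Rabs (r_inner S w v)) k).
Proof.
  intros Hu Hv Hw Hk.
  apply unit_ip in Hu, Hv, Hw.
  destruct (key_real S u v w Hu Hv Hw) as [H1 [H2 [H3 H4]]].
  pose proof (metric _ _ _ H2 H3 H4) as M.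
  rewrite <- !(sq_abs (r_inner S _ _)) in M.
  pose proof (sq_abs (r_inner S u v)). pose proof (sq_abs (r_inner S u w)). pose proof (sq_abs (r_inner S w v)).
  pose proof (Rabs_pos (r_inner S u v)). pose proof (Rabs_pos (r_inner S u w)). pose proof (Rabs_pos (r_inner S w v)).
  apply final_ineq; auto; nra.
Qed.

Lemma Cext a b c d : a = c -> b = d -> mkC a b = mkC c d.
Proof. intros; subst; reflexivity. Qed.

Section Cpx.
Context {V : Type} (S : CInnerSpace V).
Notation ip := (c_inner S).
Notation add := (c_add V S).
Notation scal := (c_scal V S).

Lemma ip_im0 x : Cim (ip x x) = 0.
Proof. pose proof (c_inner_conj _ S x x) as H. destruct (ip x x) as [a b]. simpl. injection H. lra. Qed.

Lemma c_ip_scalr a x y : ip x (scal a y) = Cmul (Cconj a) (ip x y).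
Proof.
  rewrite c_inner_conj, c_inner_scall, (c_inner_conj _ S x y).
  destruct a, (ip x y). unfold Cmul, Cconj; simpl. apply Cext; ring.
Qed.

Let rscal (a : R) (x : V) := scal (mkC a 0) x.
Let rip (x y : V) := Cre (ip x y).

Lemma rf_scalA a b x : rscal a (rscal b x) = rscal (a*b) x.
Proof. unfold rscal. rewrite c_scalA. f_equal. unfold Cmul; simpl. apply Cext; ring. Qed.
Lemma rf_scal1 x : rscal 1 x = x.
Proof. apply c_scal1. Qed.
Lemma rf_scalDr a x y : rscal a (add x y) = add (rscal a x) (rscal a y).
Proof. apply c_scalDr. Qed.
Lemma rf_scalDl a b x : rscal (a+b) x = add (rscal a x) (rscal b x).
Proof. unfold rscal. rewrite <- c_scalDl. f_equal. unfold Cadd; simpl. apply Cext; ring. Qed.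
Lemma rf_sym x y : rip x y = rip y x.
Proof. unfold rip. rewrite (c_inner_conj _ S x y). reflexivity. Qed.
Lemma rf_addl x y z : rip (add x y) z = rip x z + rip y z.
Proof. unfold rip. rewrite c_inner_addl. reflexivity. Qed.
Lemma rf_scall a x z : rip (rscal a x) z = a * rip x z.
Proof. unfold rip, rscal. rewrite c_inner_scall. simpl. ring. Qed.
Lemma rf_pos x : 0 <= rip x x.
Proof. apply c_inner_pos. Qed.
Lemma rf_def x : rip x x = 0 -> x = c_zero V S.
Proof.
  unfold rip. intro H. apply c_inner_def. pose proof (ip_im0 x).
  destruct (ip x x). simpl in *. subst. reflexivity.
Qed.

Definition realify : RInnerSpace V :=
  Build_RInnerSpace V add (c_zero V S) (c_opp V S) rscal rip
    (c_addA V S) (c_addC V S) (c_add0 V S) (c_addN V S)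
    rf_scalA rf_scal1 rf_scalDr rf_scalDl rf_sym rf_addl rf_scall rf_pos rf_def.

Lemma realify_ip x y : r_inner realify x y = Cre (ip x y).
Proof. reflexivity. Qed.
Lemma realify_norm x : r_norm realify x = c_norm S x.
Proof. reflexivity. Qed.
End Cpx.

Lemma Cmod_mul a b : Cmod (Cmul a b) = Cmod a * Cmod b.
Proof.
  unfold Cmod. rewrite <- sqrt_mult by nra. f_equal. destruct a, b; unfold Cmul; simpl. ring.
Qed.
Lemma Cmod_nonneg z : 0 <= Cmod z.
Proof. apply sqrt_pos. Qed.
Lemma Cre_le_Cmod z : Cre z * Cre z <= Cmod z * Cmod z.
Proof. unfold Cmod. rewrite sqrt_sqrt by nra. nra. Qed.

Lemma phase z : exists l, Cre l * Cre l + Cim l * Cim l = 1 /\ Cmul l z = mkC (Cmod z) 0.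
Proof.
  destruct z as [x y]. unfold Cmod; simpl.
  set (m := sqrt (x^2 + y^2)).
  assert (Hm : m * m = x^2 + y^2) by (apply sqrt_sqrt; nra).
  destruct (Req_dec m 0) as [h|h].
  - exists (mkC 1 0). simpl. split. lra. assert (x = 0) by nra. assert (y = 0) by nra. subst.
    unfold Cmul; simpl. apply Cext; [|ring]. replace (0*(0*1)+0*(0*1)) with 0 by ring. rewrite sqrt_0; ring.
  - exists (mkC (x/m) (-y/m)). simpl. split.
    + replace (x/m*(x/m) + -y/m*(-y/m)) with ((x^2+y^2)/(m*m)) by (field; auto).
      rewrite <- Hm. field. auto.
    + unfold Cmul; simpl. apply Cext.
      * replace (x / m * x - - y / m * y) with ((x^2+y^2)/m) by (field; auto).
        rewrite <- Hm. replace (sqrt (x * (x * 1) + y * (y * 1))) with m by (unfold m; f_equal; ring). field. auto.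
      * field. auto.
Qed.

Lemma Cmod_unit l : Cre l * Cre l + Cim l * Cim l = 1 -> Cmod l = 1.
Proof. intro H. unfold Cmod. rewrite <- sqrt_1. f_equal. nra. Qed.

Lemma Cconj2 z : Cconj (Cconj z) = z.
Proof. destruct z; unfold Cconj; simpl. rewrite Ropp_involutive. reflexivity. Qed.

Lemma cnorm_re {V} (S : CInnerSpace V) u : c_norm S u = 1 -> Cre (c_inner S u u) = 1.
Proof. intro H. rewrite <- (realify_norm S) in H. apply unit_ip in H. exact H. Qed.

Lemma scal_unit_norm {V} (S : CInnerSpace V) l u :
  Cre l * Cre l + Cim l * Cim l = 1 -> c_norm S u = 1 -> c_norm S (c_scal V S l u) = 1.
Proof.
  intros Hl Hu. apply cnorm_re in Hu. pose proof (ip_im0 S u) as Hi.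
  unfold c_norm. rewrite c_inner_scall, c_ip_scalr.
  destruct (c_inner S u u) as [a b]. simpl in *. subst. destruct l as [x y]; simpl in *.
  match goal with |- sqrt ?e = 1 => replace e with 1 by nra end; apply sqrt_1.
Qed.

Lemma complex_case (V : Type) (S : CInnerSpace V) (u v w : V) (k : R) :
     c_norm S u = 1 -> c_norm S v = 1 -> c_norm S w = 1 -> 2 <= k ->
     kroot k (1 - rpow (Cmod (c_inner S u v)) k)
       <= kroot k (1 - rpow (Cmod (c_inner S u w)) k)
          + kroot k (1 - rpow (Cmod (c_inner S w v)) k).
Proof.
  intros Hu Hv Hw Hk.
  destruct (phase (c_inner S u w)) as [l [Hl Hlq]].
  destruct (phase (c_inner S w v)) as [n [Hn Hnr]].
  destruct (phase (c_inner S u v)) as [l' [Hl' Hlp]].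
  set (u1 := c_scal V S l u). set (v1 := c_scal V S (Cconj n) v). set (u2 := c_scal V S l' u).
  assert (Hn' : Cre (Cconj n) * Cre (Cconj n) + Cim (Cconj n) * Cim (Cconj n) = 1)
    by (destruct n; simpl in *; lra).
  assert (Hu1 := scal_unit_norm S l u Hl Hu).
  assert (Hv1 := scal_unit_norm S (Cconj n) v Hn' Hv).
  assert (Hu2 := scal_unit_norm S l' u Hl' Hu).
  rewrite <- (realify_norm S) in Hu1, Hv1, Hu2, Hv, Hw.
  apply unit_ip in Hu1, Hv1, Hu2, Hv, Hw.
  destruct (key_real (realify S) u1 v1 w Hu1 Hv1 Hw) as [H1 [H2 [H3 H4]]].
  destruct (key_real (realify S) u2 v w Hu2 Hv Hw) as [G1 _].
  rewrite !realify_ip in H1, H2, H3, H4, G1.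
  assert (E1 : c_inner S u1 w = mkC (Cmod (c_inner S u w)) 0) by (unfold u1; rewrite c_inner_scall; exact Hlq).
  assert (E2 : c_inner S w v1 = mkC (Cmod (c_inner S w v)) 0) by (unfold v1; rewrite c_ip_scalr, Cconj2; exact Hnr).
  assert (E3 : c_inner S u2 v = mkC (Cmod (c_inner S u v)) 0) by (unfold u2; rewrite c_inner_scall; exact Hlp).
  assert (E4 : c_inner S u1 v1 = Cmul l (Cmul n (c_inner S u v))) by (unfold u1, v1; rewrite c_inner_scall, c_ip_scalr, Cconj2; reflexivity).
  rewrite E1, E2, E4 in *. rewrite E3 in G1. cbn [Cre] in H1, H2, H3, H4, G1.
  set (P := Cre (Cmul l (Cmul n (c_inner S u v)))) in *.
  assert (HP : P * P <= Cmod (c_inner S u v) * Cmod (c_inner S u v)).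
  { pose proof (Cre_le_Cmod (Cmul l (Cmul n (c_inner S u v)))).
    rewrite !Cmod_mul, (Cmod_unit l Hl), (Cmod_unit n) in H by (destruct n; simpl in *; lra).
    fold P in H. lra. }
  rewrite !realify_ip, E1, E2 in H4. cbn [Cre] in H4.
  pose proof (metric _ _ _ H2 H3 H4) as M.
  pose proof (Cmod_nonneg (c_inner S u v)). pose proof (Cmod_nonneg (c_inner S u w)).
  pose proof (Cmod_nonneg (c_inner S w v)).
  apply final_ineq; auto; try nra.
  eapply Rle_trans; [|exact M]. apply sqrt_le_1_alt. lra.
Qed.

Theorem corollary5 :
  (* real inner product spaces *)
  (forall (V : Type) (S : RInnerSpace V) (u v w : V) (k : R),
     r_norm S u = 1 -> r_norm S v = 1 -> r_norm S w = 1 -> 2 <= k ->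
     kroot k (1 - rpow (Rabs (r_inner S u v)) k)
       <= kroot k (1 - rpow (Rabs (r_inner S u w)) k)
          + kroot k (1 - rpow (Rabs (r_inner S w v)) k))
  /\
  (* complex inner product spaces: modulus, and |Re| *)
  (forall (V : Type) (S : CInnerSpace V) (u v w : V) (k : R),
     c_norm S u = 1 -> c_norm S v = 1 -> c_norm S w = 1 -> 2 <= k ->
     kroot k (1 - rpow (Cmod (c_inner S u v)) k)
       <= kroot k (1 - rpow (Cmod (c_inner S u w)) k)
          + kroot k (1 - rpow (Cmod (c_inner S w v)) k)
     /\
     kroot k (1 - rpow (Rabs (Cre (c_inner S u v))) k)
       <= kroot k (1 - rpow (Rabs (Cre (c_inner S u w))) k)
          + kroot k (1 - rpow (Rabs (Cre (c_inner S w v))) k)).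
Proof.
  split.
  - exact real_case.
  - intros V S u v w k Hu Hv Hw Hk. split.
    + apply complex_case; auto.
    + rewrite <- (realify_norm S) in Hu, Hv, Hw.
      exact (real_case V (realify S) u v w k Hu Hv Hw Hk).
Qed.
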